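(* Let $n=2k$ with $k\ge 2$. If $S$ is a strong resolving set of $S_n$, then $|S|\ge \frac{3n}{2}$.
   Context: For $n\ge 3$, $S_n$ is the graph with vertex set $\{a_i,b_i,c_i,d_i : 1\le i\le n\}$ and edge set $\{a_ia_{i+1}, b_ib_{i+1}, c_ic_{i+1}, d_id_{i+1}, a_{i+1}b_i, a_ib_i, b_ic_i, c_id_i : 1\le i\le n\}$, indices taken modulo $n$. $d$ is the graph distance. A vertex $w$ strongly resolves distinct vertices $u,v$ if $d(v,w)=d(v,u)+d(u,w)$ or $d(u,w)=d(u,v)+d(v,w)$. A set $S$ is a strong resolving set if every two distinct vertices are strongly resolved by some vertex of $S$. *)

(* Defs.v *)
From mathcomp Require Import all_boot.
Set Implicit Arguments. Unset Strict Implicit. Unset Printing Implicit Defensive.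

Section Dist.
Variables (T : finType) (adj : rel T).

Fixpoint reach (m : nat) (u v : T) : bool :=
  if m is m'.+1 then reach m' u v || [exists w, reach m' u w && adj w v]
  else u == v.

(* graph distance: least m with reach m u v (the graphs used below are
   connected, so the fallback value #|T| for unreachable pairs is never used) *)
Definition gdist (u v : T) : nat := find (fun m => reach m u v) (iota 0 #|T|).

Definition strongly_resolves (w u v : T) : bool :=
  (gdist v w == gdist v u + gdist u w) || (gdist u w == gdist u v + gdist v w).

Definition strong_resolving_set (S : {set T}) : Prop :=
  forall u v : T, u != v -> exists2 w, w \in S & strongly_resolves w u v.
End Dist.

(* The graph S_n: vertex (t, i) with t = 0,1,2,3 standing for a_i, b_i, c_i, d_i. *)
Definition Sn_vertex (n : nat) := ('I_4 * 'I_n)%type.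

Definition Sn_edge (n : nat) (x y : Sn_vertex n) : bool :=
  let: (t, i) := x in let: (s, j) := y in
  [|| (t == s) && (nat_of_ord j == (nat_of_ord i).+1 %% n),          (* x_i x_{i+1} *)
      [&& nat_of_ord t == 0, nat_of_ord s == 1 & nat_of_ord i == (nat_of_ord j).+1 %% n], (* a_{i+1} b_i *)
      [&& nat_of_ord t == 0, nat_of_ord s == 1 & nat_of_ord i == nat_of_ord j],      (* a_i b_i *)
      [&& nat_of_ord t == 1, nat_of_ord s == 2 & nat_of_ord i == nat_of_ord j]       (* b_i c_i *)
    | [&& nat_of_ord t == 2, nat_of_ord s == 3 & nat_of_ord i == nat_of_ord j]].     (* c_i d_i *)

Definition Sn_adj (n : nat) : rel (Sn_vertex n) :=
  fun x y => Sn_edge x y || Sn_edge y x.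

(* Main.v *)
Require Import Defs.
From mathcomp Require Import all_boot zify.
Set Implicit Arguments. Unset Strict Implicit. Unset Printing Implicit Defensive.

Section Gen.
Variables (T : finType) (adj : rel T).
Hypothesis adj_sym : symmetric adj.

Lemma reach_step m u w v : reach adj m u w -> adj w v -> reach adj m.+1 u v.
Proof. by move=> h1 h2 /=; apply/orP; right; apply/existsP; exists w; rewrite h1. Qed.

Lemma reach_mono m p u v : m <= p -> reach adj m u v -> reach adj p u v.
Proof.
elim: p => [|p IH]; first by rewrite leqn0 => /eqP ->.
rewrite leq_eqVlt => /orP [/eqP -> //| ]; rewrite ltnS => /IH h r /=.
by rewrite h.
Qed.

Lemma reach_cat m p u w v : reach adj m u w -> reach adj p w v -> reach adj (m + p) u v.
Proof.
move=> r1; elim: p v => [|p IH] v /=; first by move/eqP <-; rewrite addn0.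
case/orP => [r|/existsP [x /andP [r a]]].
  by rewrite addnS /= IH.
by rewrite addnS; apply: reach_step (IH _ r) a.
Qed.

Lemma reach_sym m u v : reach adj m u v -> reach adj m v u.
Proof.
elim: m v => [|m IH] v /=; first by rewrite eq_sym.
case/orP => [r|/existsP [x /andP [r a]]].
  by rewrite (IH _ r).
have r1 : reach adj 1 v x.
  apply: (@reach_step 0 v v x); first by rewrite /=.
  by rewrite adj_sym.
exact: (reach_cat r1 (IH _ r)).
Qed.

Lemma reach_pot (F : T -> nat) c :
  (forall x y, adj x y -> F y <= F x + c) ->
  forall m u v, reach adj m u v -> F v <= F u + c * m.
Proof.
move=> HF; elim=> [|m IH] u v /=; first by move/eqP ->; rewrite muln0 addn0.
case/orP => [r|/existsP [x /andP [r a]]].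
  have := IH _ _ r; lia.
have := IH _ _ r; have := HF _ _ a; lia.
Qed.

Hypothesis conn : forall u v, exists2 m, m < #|T| & reach adj m u v.

Lemma gdist_has u v : has (fun m => reach adj m u v) (iota 0 #|T|).
Proof. by case: (conn u v) => m hm r; apply/hasP; exists m => //; rewrite mem_iota. Qed.

Lemma gdist_lt u v : gdist adj u v < #|T|.
Proof. by rewrite /gdist -{2}(size_iota 0 #|T|) -has_find gdist_has. Qed.

Lemma gdist_reach u v : reach adj (gdist adj u v) u v.
Proof. by have := nth_find 0 (gdist_has u v); rewrite nth_iota ?gdist_lt. Qed.

Lemma gdist_min m u v : reach adj m u v -> gdist adj u v <= m.
Proof.
move=> r; case: (leqP #|T| m) => hm; first exact: ltnW (leq_trans (gdist_lt u v) hm).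
rewrite leqNgt; apply/negP => lt.
by have := before_find 0 lt; rewrite nth_iota // add0n r.
Qed.

Lemma gdist_sym u v : gdist adj u v = gdist adj v u.
Proof.
by apply/eqP; rewrite eqn_leq !gdist_min // reach_sym // gdist_reach.
Qed.

Lemma gdist_tri u w v : gdist adj u v <= gdist adj u w + gdist adj w v.
Proof. by apply: gdist_min; apply: reach_cat; apply: gdist_reach. Qed.

Lemma gdist_pot (F : T -> nat) c :
  (forall x y, adj x y -> F y <= F x + c) ->
  forall u v, F v <= F u + c * gdist adj u v.
Proof. by move=> HF u v; apply: reach_pot HF _ _ _ (gdist_reach u v). Qed.

Lemma gdist_last w u : w != u -> exists x, adj x u /\ (gdist adj w x).+1 <= gdist adj w u.
Proof.
move=> wu; move: (gdist_reach w u); case E: (gdist adj w u) => [|m] /=.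
  by move=> h; rewrite h in wu.
case/orP => [r|/existsP [x /andP [r a]]].
  by have := gdist_min r; rewrite E ltnn.
by exists x; split => //; rewrite ltnS gdist_min.
Qed.

Lemma mmd u v w :
  (forall x, adj u x -> gdist adj v x <= gdist adj v u) ->
  (forall x, adj v x -> gdist adj u x <= gdist adj u v) ->
  strongly_resolves adj w u v -> (w == u) || (w == v).
Proof.
move=> Hu Hv /orP [/eqP E | /eqP E].
  case: (boolP (w == u)) => [wu|wu]; first by apply/orP; left.
  case: (gdist_last wu) => x [axu lt].
  have axu' : adj u x by rewrite adj_sym.
  have := Hu x axu'. have := gdist_tri v x w.
  have := gdist_sym x w; have := gdist_sym u w. lia.
case: (boolP (w == v)) => [wv|wv]; first by apply/orP; right.
case: (gdist_last wv) => x [axv lt].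
have axv' : adj v x by rewrite adj_sym.
have := Hv x axv'. have := gdist_tri u x w.
have := gdist_sym x w; have := gdist_sym v w. lia.
Qed.
End Gen.


Definition LA : 'I_4 := @Ordinal 4 0 isT.
Definition LB : 'I_4 := @Ordinal 4 1 isT.
Definition LC : 'I_4 := @Ordinal 4 2 isT.
Definition LD : 'I_4 := @Ordinal 4 3 isT.

Lemma layer_cases (t : 'I_4) : [\/ t = LA, t = LB, t = LC | t = LD].
Proof.
case: t => [m hm]; have h := hm.
case: m hm h => [|[|[|[|m]]]] hm h //.
- by apply: Or41; apply: val_inj.
- by apply: Or42; apply: val_inj.
- by apply: Or43; apply: val_inj.
- by apply: Or44; apply: val_inj.
Qed.

Section Sn.
Variable k : nat.
Hypothesis hk : 2 <= k.
Local Notation n := (2 * k).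
Local Notation T := (Sn_vertex (2 * k)).
Local Notation adj := (@Sn_adj (2 * k)).

Lemma npos : 0 < n. Proof. lia. Qed.

Definition vx (t : 'I_4) (i : nat) : T := (t, Ordinal (ltn_pmod i npos)).

Lemma vx_mod t a b : a %% n = b %% n -> vx t a = vx t b.
Proof. by move=> h; congr pair; apply: val_inj. Qed.

Lemma vxE (x : T) : x = vx x.1 x.2.
Proof. by case: x => t i; congr pair; apply: val_inj; rewrite /= modn_small. Qed.

Lemma modS_mod a : (a %% n).+1 %% n = a.+1 %% n.
Proof. by rewrite -[(a %% n).+1]addn1 -[a.+1]addn1 modnDml. Qed.

Lemma adj_sym : symmetric adj.
Proof. by move=> x y; rewrite /Sn_adj orbC. Qed.

Lemma adj_hor t a : adj (vx t a) (vx t a.+1).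
Proof. by rewrite /Sn_adj /Sn_edge /= eqxx modS_mod eqxx. Qed.

Lemma adj_ab a : adj (vx LA a) (vx LB a).
Proof. by rewrite /Sn_adj /Sn_edge /= ?modS_mod eqxx /= ?orbT. Qed.

Lemma adj_ab1 a : adj (vx LA a.+1) (vx LB a).
Proof. by rewrite /Sn_adj /Sn_edge /= ?modS_mod eqxx /= ?orbT. Qed.

Lemma adj_bc a : adj (vx LB a) (vx LC a).
Proof. by rewrite /Sn_adj /Sn_edge /= ?modS_mod eqxx /= ?orbT. Qed.

Lemma adj_cd a : adj (vx LC a) (vx LD a).
Proof. by rewrite /Sn_adj /Sn_edge /= ?modS_mod eqxx /= ?orbT. Qed.


Lemma rsym m u v : reach adj m u v -> reach adj m v u.
Proof. exact: (@reach_sym _ adj adj_sym). Qed.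

Lemma rstep m u w v : reach adj m u w -> adj w v -> reach adj m.+1 u v.
Proof. exact: (@reach_step _ adj). Qed.

Lemma reach_fwd t a m : reach adj m (vx t a) (vx t (a + m)).
Proof.
elim: m => [|m IH] /=; first by rewrite addn0.
by apply: rstep IH _; rewrite addnS adj_hor.
Qed.

Lemma reach_hor t a b m : a + m = b \/ a + m = b + n -> reach adj m (vx t a) (vx t b).
Proof.
case=> h; have := reach_fwd t a m; rewrite h //.
by rewrite (@vx_mod t (b + n) b) // modnDr.
Qed.

Lemma reach_hor' t a b m : b + m = a \/ b + m = a + n -> reach adj m (vx t a) (vx t b).
Proof. by move=> h; apply: rsym; apply: reach_hor. Qed.

Lemma near2 t i j : i < n -> j < n ->
  exists m e, [/\ m <= k.-1, e <= 1 & reach adj m (vx t i) (vx t (j + e))].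
Proof.
move=> hi hj; case: (leqP i j) => hij.
- case: (ltngtP (j - i) k) => hd.
  + by exists (j - i), 0; split; [lia|lia|apply: reach_hor; lia].
  + by exists (n - (j - i)), 0; split; [lia|lia|apply: reach_hor'; lia].
  + by exists k.-1, 1; split; [lia|lia|apply: reach_hor'; lia].
- case: (ltngtP (i - j) k) => hd.
  + by exists (i - j), 0; split; [lia|lia|apply: reach_hor'; lia].
  + by exists (n - (i - j)), 0; split; [lia|lia|apply: reach_hor; lia].
  + by exists k.-1, 1; split; [lia|lia|apply: reach_hor'; lia].
Qed.

Lemma near1 t i j : i < n -> j < n ->
  exists m, m <= k /\ reach adj m (vx t i) (vx t j).
Proof.
move=> hi hj; case: (near2 t hi hj) => m [e [hm he r]].
case: e he r => [|[|e]] he r //.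
- by exists m; split; [lia| rewrite addn0 in r].
- exists m.+1; split; first lia.
  by apply: rstep r _; rewrite adj_sym addn1 adj_hor.
Qed.


Lemma adj_ba a : adj (vx LB a) (vx LA a). Proof. by rewrite adj_sym adj_ab. Qed.
Lemma adj_cb a : adj (vx LC a) (vx LB a). Proof. by rewrite adj_sym adj_bc. Qed.
Lemma adj_dc a : adj (vx LD a) (vx LC a). Proof. by rewrite adj_sym adj_cd. Qed.

Lemma to_a p e : e <= 1 -> adj (vx LB (p + e)) (vx LA p.+1).
Proof.
case: e => [|[|e]] he //; first by rewrite addn0 adj_sym adj_ab1.
by rewrite addn1 adj_ba.
Qed.

Lemma to_b p e : e <= 1 -> adj (vx LA (p + e)) (vx LB p).
Proof.
case: e => [|[|e]] he //; first by rewrite addn0 adj_ab.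
by rewrite addn1 adj_ab1.
Qed.

Lemma exists_pred i : i < n -> exists2 p, p < n & vx LA i = vx LA p.+1.
Proof.
case: i => [|i] hi.
  exists n.-1; first lia.
  by apply: vx_mod; rewrite prednK ?npos // modnn mod0n.
by exists i; first lia.
Qed.

Lemma vx_ind (P : T -> Prop) : (forall t i, i < n -> P (vx t i)) -> forall x, P x.
Proof. by move=> H x; rewrite (vxE x); apply: H (ltn_ord _). Qed.

Lemma vx_modn t j : vx t j = vx t (j %% n).
Proof. by apply: vx_mod; rewrite modn_mod. Qed.

Lemma R1 j x : exists m, m <= k + 2 /\ reach adj m (vx LD j) x.
Proof.
rewrite vx_modn; have hj : j %% n < n := ltn_pmod j npos.
move: (j %% n) hj => {}j hj; move: x; apply: vx_ind => t i hi.
case: (layer_cases t) => ->.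
- case: (exists_pred hi) => p hp ->.
  case: (near2 LD hj hp) => m [e [hm he r]].
  exists m.+3; split; first lia.
  apply: (rstep _ (to_a p he)); apply: (rstep _ (adj_cb _)); exact: (rstep r (adj_dc _)).
- case: (near1 LD hj hi) => m [hm r]; exists m.+2; split; first lia.
  apply: (rstep _ (adj_cb _)); exact: (rstep r (adj_dc _)).
- case: (near1 LD hj hi) => m [hm r]; exists m.+1; split; first lia.
  exact: (rstep r (adj_dc _)).
- by case: (near1 LD hj hi) => m [hm r]; exists m; split; first lia.
Qed.

Lemma R2 j x : exists m, m <= k + 2 /\ reach adj m (vx LB j) x.
Proof.
rewrite vx_modn; have hj : j %% n < n := ltn_pmod j npos.
move: (j %% n) hj => {}j hj; move: x; apply: vx_ind => t i hi.
case: (layer_cases t) => ->.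
- case: (exists_pred hi) => p hp ->.
  case: (near2 LB hj hp) => m [e [hm he r]].
  exists m.+1; split; first lia.
  exact: (rstep r (to_a p he)).
- by case: (near1 LB hj hi) => m [hm r]; exists m; split; first lia.
- case: (near1 LB hj hi) => m [hm r]; exists m.+1; split; first lia.
  exact: (rstep r (adj_bc _)).
- case: (near1 LB hj hi) => m [hm r]; exists m.+2; split; first lia.
  apply: (rstep _ (adj_cd _)); exact: (rstep r (adj_bc _)).
Qed.

Lemma R3 j x : nat_of_ord x.1 <= 1 -> exists m, m <= k /\ reach adj m (vx LA j) x.
Proof.
rewrite vx_modn; have hj : j %% n < n := ltn_pmod j npos.
move: (j %% n) hj => {}j hj; move: x; apply: vx_ind => t i hi.
case: (layer_cases t) => -> // _.
- by case: (near1 LA hj hi) => m [hm r]; exists m; split; first lia.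
- case: (near2 LA hj hi) => m [e [hm he r]].
  exists m.+1; split; first lia.
  exact: (rstep r (to_b i he)).
Qed.

Lemma up_d t i : exists m, m <= 3 /\ reach adj m (vx t i) (vx LD i).
Proof.
have r0 : forall u : T, reach adj 0 u u by move=> u /=.
case: (layer_cases t) => ->.
- exists 3; split => //.
  apply: (rstep _ (adj_cd _)); apply: (rstep _ (adj_bc _)); exact: (rstep (r0 _) (adj_ab _)).
- exists 2; split => //.
  apply: (rstep _ (adj_cd _)); exact: (rstep (r0 _) (adj_bc _)).
- by exists 1; split => //; exact: (rstep (r0 _) (adj_cd _)).
- by exists 0.
Qed.

Lemma cardT : #|{: T}| = 4 * n.
Proof. by rewrite card_prod !card_ord. Qed.

Lemma conn (u v : T) : exists2 m, m < #|{: T}| & reach adj m u v.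
Proof.
move: u; apply: vx_ind => t i hi.
case: (up_d t i) => m1 [h1 r1]; case: (R1 i v) => m2 [h2 r2].
exists (m1 + m2); first by rewrite cardT; lia.
exact: reach_cat r1 r2.
Qed.


Definition cdist (N p q : nat) := minn (p - q + (q - p)) (N - (p - q + (q - p))).
Definition pos (x : T) : nat :=
  if nat_of_ord x.1 == 0 then 2 * x.2 else (2 * x.2).+1.
Definition hgt (x : T) : nat :=
  if nat_of_ord x.1 == 0 then 5 else if nat_of_ord x.1 == 1 then 4
  else if nat_of_ord x.1 == 2 then 2 else 0.
Definition F (w : bool) (q : nat) (x : T) :=
  (if w then hgt x else 0) + cdist (4 * k) (pos x) q.

Lemma modS_cases i : i < n -> (i.+1 < n /\ i.+1 %% n = i.+1) \/ (i.+1 = n /\ i.+1 %% n = 0).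
Proof.
move=> hi; case: (ltngtP i.+1 n) => h; first by left; rewrite modn_small.
  lia.
by right; rewrite h modnn.
Qed.

Lemma edge_lip w q x y : q < 4 * k -> Sn_edge x y ->
  F w q y <= F w q x + 2 /\ F w q x <= F w q y + 2.
Proof.
move=> hq; case: x y => [[t ht] [i hi]] [[s hs] [j hj]].
rewrite /Sn_edge /F /hgt /pos /cdist /=.
case: (modS_cases hi) => [[? ->]|[? ->]]; case: (modS_cases hj) => [[? ->]|[? ->]];
case: t ht => [|[|[|[|t]]]] ht //; case: s hs => [|[|[|[|s]]]] hs //=; case: w => /=; lia.
Qed.


Lemma adj_lip w q x y : q < 4 * k -> adj x y -> F w q y <= F w q x + 2.
Proof.
move=> hq /orP [e|e]; first by case: (edge_lip w hq e).
by case: (edge_lip w hq e).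
Qed.

Lemma mod2 a : a < n + n -> (a < n /\ a %% n = a) \/ (n <= a /\ a %% n = a - n).
Proof.
move=> ha; case: (ltnP a n) => h; first by left; rewrite modn_small.
right; split => //; rewrite -{1}(subnK h) modnDr modn_small //; lia.
Qed.

Lemma pos_lt x : pos x < 4 * k.
Proof. case: x => t [i hi]; rewrite /pos /=; case: (_ == 0); lia. Qed.

Lemma gpot w q u v : q < 4 * k -> F w q v <= F w q u + 2 * gdist adj u v.
Proof.
move=> hq; apply: (@gdist_pot _ adj conn (F w q) 2) => x y.
exact: adj_lip.
Qed.

Lemma L1 i : i < n -> k + 2 <= gdist adj (vx LD (i + k)) (vx LB i).
Proof.
move=> hi; have := @gpot true _ (vx LD (i + k)) (vx LB i) (pos_lt (vx LD (i + k))).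
rewrite /F /hgt /pos /cdist /= (modn_small hi).
have : i + k < n + n by lia.
case/mod2 => [[? ->]|[? ->]]; lia.
Qed.

Lemma L2 i : i < k -> k <= gdist adj (vx LA i) (vx LA (i + k)).
Proof.
move=> hi; have := @gpot false _ (vx LA i) (vx LA (i + k)) (pos_lt (vx LA i)).
rewrite /F /hgt /pos /cdist /= !modn_small; lia.
Qed.


Lemma nbA a y : adj (vx LA a) y -> nat_of_ord y.1 <= 1.
Proof.
case: y => [[s hs] [j hj]]; rewrite /Sn_adj /Sn_edge /=.
by case: s hs => [|[|[|[|s]]]] hs //=.
Qed.

Lemma gmin m u v : reach adj m u v -> gdist adj u v <= m.
Proof. exact: (@gdist_min _ adj conn). Qed.

Lemma gsym u v : gdist adj u v = gdist adj v u.
Proof. exact: (@gdist_sym _ adj adj_sym conn). Qed.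

Lemma pair1 (S : {set T}) i : strong_resolving_set adj S -> i < n ->
  (vx LB i \in S) || (vx LD (i + k) \in S).
Proof.
move=> HS hi.
have neq : vx LB i != vx LD (i + k).
  by apply/eqP => /(congr1 (fun x : T => nat_of_ord x.1)).
case: (HS _ _ neq) => w wS sr.
have Hu : forall x, adj (vx LB i) x ->
    gdist adj (vx LD (i + k)) x <= gdist adj (vx LD (i + k)) (vx LB i).
  move=> x _; case: (R1 (i + k) x) => m [hm r]; have := gmin r; have := L1 hi; lia.
have Hv : forall x, adj (vx LD (i + k)) x ->
    gdist adj (vx LB i) x <= gdist adj (vx LB i) (vx LD (i + k)).
  move=> x _; case: (R2 i x) => m [hm r]; have := gmin r; have := L1 hi.
  rewrite (gsym (vx LB i) (vx LD (i + k))); lia.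
by case/orP: (@mmd _ adj adj_sym conn _ _ _ Hu Hv sr) => /eqP E; rewrite -E wS ?orbT.
Qed.

Lemma pair2 (S : {set T}) i : strong_resolving_set adj S -> i < k ->
  (vx LA i \in S) || (vx LA (i + k) \in S).
Proof.
move=> HS hi.
have neq : vx LA i != vx LA (i + k).
  apply/eqP => /(congr1 (fun x : T => nat_of_ord x.2)) /=.
  rewrite !modn_small; lia.
case: (HS _ _ neq) => w wS sr.
have Hu : forall x, adj (vx LA i) x ->
    gdist adj (vx LA (i + k)) x <= gdist adj (vx LA (i + k)) (vx LA i).
  move=> x /nbA hx; case: (R3 (i + k) hx) => m [hm r]; have := gmin r; have := L2 hi.
  rewrite (gsym (vx LA i) (vx LA (i + k))); lia.
have Hv : forall x, adj (vx LA (i + k)) x ->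
    gdist adj (vx LA i) x <= gdist adj (vx LA i) (vx LA (i + k)).
  move=> x /nbA hx; case: (R3 i hx) => m [hm r]; have := gmin r; have := L2 hi; lia.
by case/orP: (@mmd _ adj adj_sym conn _ _ _ Hu Hv sr) => /eqP E; rewrite -E wS ?orbT.
Qed.

Definition pr1 m : T := if m < n then vx LB m else vx LA (m - n).
Definition pr2 m : T := if m < n then vx LD (m + k) else vx LA (m - n + k).
Definition g (x : T) : nat :=
  if nat_of_ord x.1 == 1 then nat_of_ord x.2
  else if nat_of_ord x.1 == 3 then (x.2 + k) %% n
  else if nat_of_ord x.2 < k then n + x.2 else n + x.2 - k.

Lemma g1 m : m < 3 * k -> g (pr1 m) = m.
Proof.
move=> hm; rewrite /pr1 /g; case: ltnP => h /=; first by rewrite modn_small.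
rewrite modn_small; last lia.
case: ltnP => hc; lia.
Qed.

Lemma g2 m : m < 3 * k -> g (pr2 m) = m.
Proof.
move=> hm; rewrite /pr2 /g; case: ltnP => h /=.
  rewrite modnDml; have -> : m + k + k = m + n by lia.
  by rewrite modnDr modn_small.
rewrite modn_small; last lia.
case: ltnP => hc; lia.
Qed.

Lemma cover (S : {set T}) m : strong_resolving_set adj S -> m < 3 * k ->
  (pr1 m \in S) || (pr2 m \in S).
Proof.
move=> HS hm; rewrite /pr1 /pr2; case: ltnP => h; first exact: pair1.
apply: pair2 => //; lia.
Qed.

Lemma main (S : {set T}) : strong_resolving_set adj S -> 3 * k <= #|S|.
Proof.
move=> HS.
pose c (m : 'I_(3 * k)) : T := if pr1 m \in S then pr1 m else pr2 m.
have cS : forall m, c m \in S.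
  move=> m; rewrite /c; case: ifP => // h.
  by move: (cover HS (ltn_ord m)); rewrite h.
have gc : forall m, g (c m) = m.
  by move=> m; rewrite /c; case: ifP => _; [exact: g1 | exact: g2].
have inj : injective c.
  by move=> m1 m2 E; apply: val_inj; rewrite /= -(gc m1) -(gc m2) E.
have sub : [set c m | m in 'I_(3 * k)] \subset S.
  by apply/subsetP => x /imsetP [m _ ->].
by have := subset_leq_card sub; rewrite card_imset // card_ord.
Qed.

End Sn.

Theorem lemma3p11 (k : nat) (hk : 2 <= k) (S : {set Sn_vertex (2 * k)}) :
  strong_resolving_set (@Sn_adj (2 * k)) S -> 3 * k <= #|S|.
Proof. exact: main. Qed.
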